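(* Let $A=\begin{bmatrix}a&b\\c&d\end{bmatrix}$ be a real $2\times 2$ matrix. Then: (1) $a$ is an interior L-eigenvalue of $A$ if and only if $b=0$ and either $a=d$ or $|a-d|<|c|$; (2) a real number $\lambda\neq a$ is an interior L-eigenvalue of $A$ if and only if $\lambda$ is a (real) root of $t^2-(a+d)t+(ad-bc)$, i.e. $\lambda\in\{\frac{a+d\pm\sqrt{(a-d)^2+4bc}}{2}\}\subseteq\mathbb{R}$, and $|b|<|a-\lambda|$; (3) $\lambda$ is a boundary L-eigenvalue of $A$ if and only if one of the following holds: (a) $\lambda=\frac{(a+d)+(b+c)}{2}$ and $a-d\le c-b$; (b) $\lambda=\frac{(a+d)-(b+c)}{2}$ and $a-d\le b-c$.
   Context: The Lorentz cone in $\mathbb{R}^2$ is $\mathcal{K}=\{(x_1,x_2)^T:\ |x_1|\le x_2\}$. For a real $2\times2$ matrix $A$, a real $\lambda$ is an L-eigenvalue of $A$ if there is a nonzero $x\in\mathcal{K}$ with $(A-\lambda I)x\in\mathcal{K}$ and $x^T(A-\lambda I)x=0$ ($x$ is an associated L-eigenvector). $\lambda$ is an interior L-eigenvalue if it has an associated L-eigenvector in the interior of $\mathcal{K}$, and a boundary L-eigenvalue if it has an associated L-eigenvector on the boundary of $\mathcal{K}$. *)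

(* Defs.v *)
From Stdlib Require Import Reals.
Open Scope R_scope.

(* Lorentz cone in R^2: { (x1,x2) | |x1| <= x2 } *)
Definition inK (x1 x2 : R) : Prop := Rabs x1 <= x2.
Definition inIntK (x1 x2 : R) : Prop := Rabs x1 < x2.
Definition inBdK (x1 x2 : R) : Prop := Rabs x1 = x2.

(* A = [[a, b], [c, d]] ; x = (x1, x2)^T.
   (A - l I) x = ((a - l) x1 + b x2, c x1 + (d - l) x2). *)
Definition L_eigvec (a b c d l x1 x2 : R) : Prop :=
  (x1 <> 0 \/ x2 <> 0) /\
  inK x1 x2 /\
  inK ((a - l) * x1 + b * x2) (c * x1 + (d - l) * x2) /\
  x1 * ((a - l) * x1 + b * x2) + x2 * (c * x1 + (d - l) * x2) = 0.

Definition interior_L_eigenvalue (a b c d l : R) : Prop :=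
  exists x1 x2, L_eigvec a b c d l x1 x2 /\ inIntK x1 x2.

Definition boundary_L_eigenvalue (a b c d l : R) : Prop :=
  exists x1 x2, L_eigvec a b c d l x1 x2 /\ inBdK x1 x2.

(* Main.v *)
Require Import Defs.
From Stdlib Require Import Reals Lra Psatz.
Open Scope R_scope.

Ltac absc := unfold Rabs in *; repeat match goal with
  | |- context[Rcase_abs ?x] => destruct (Rcase_abs x)
  | H: context[Rcase_abs ?x] |- _ => destruct (Rcase_abs x) end.

Lemma orth_int x1 x2 y1 y2 : Rabs x1 < x2 -> Rabs y1 <= y2 ->
  x1*y1 + x2*y2 = 0 -> y1 = 0 /\ y2 = 0.
Proof.
  intros H1 H2 H3.
  assert (y2 = 0).
  { absc; nra. }
  subst. split; [|reflexivity]. absc; lra.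
Qed.

Lemma int_char a b c d l : interior_L_eigenvalue a b c d l ->
  exists x1 x2, (a-l)*x1+b*x2=0 /\ c*x1+(d-l)*x2=0 /\ Rabs x1 < x2.
Proof.
  intros [x1 [x2 [[_ [H1 [H2 H3]]] H4]]].
  destruct (orth_int _ _ _ _ H4 H2 H3). eauto.
Qed.

Lemma mk_int a b c d l x1 x2 : (a-l)*x1+b*x2=0 -> c*x1+(d-l)*x2=0 ->
  Rabs x1 < x2 -> interior_L_eigenvalue a b c d l.
Proof.
  intros H1 H2 H3. exists x1, x2. unfold L_eigvec, inK, inIntK.
  rewrite H1, H2, Rabs_R0. repeat split; try lra.
  right. pose proof (Rabs_pos x1). lra.
Qed.

Theorem theorem3p1 (a b c d : R) :
  (interior_L_eigenvalue a b c d a <->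
     b = 0 /\ (a = d \/ Rabs (a - d) < Rabs c)) /\
  (forall l : R, l <> a ->
     (interior_L_eigenvalue a b c d l <->
        l * l - (a + d) * l + (a * d - b * c) = 0 /\ Rabs b < Rabs (a - l))) /\
  (forall l : R,
     boundary_L_eigenvalue a b c d l <->
       (l = ((a + d) + (b + c)) / 2 /\ a - d <= c - b) \/
       (l = ((a + d) - (b + c)) / 2 /\ a - d <= b - c)).
Proof.
  split; [|split].
  - split.
    + intros H. destruct (int_char _ _ _ _ _ H) as [x1 [x2 [H1 [H2 H3]]]].
      pose proof (Rabs_pos x1).
      replace (a-a) with 0 in H1 by ring.
      assert (b = 0) by nra. split; [assumption|].
      destruct (Req_dec a d) as [E|E]; [left; exact E|right].
      assert (Rabs (a-d) * x2 = Rabs c * Rabs x1).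
      { rewrite <- (Rabs_pos_eq x2) by lra. rewrite <- !Rabs_mult. replace ((a-d)*x2) with (c*x1) by nra. reflexivity. }
      destruct (Req_dec c 0) as [C|C].
      * subst c. exfalso. apply E. nra.
      * pose proof (Rabs_pos_lt c C). pose proof (Rabs_pos (a-d)). nra.
    + intros [Hb [E|E]].
      * subst. apply (mk_int _ _ _ _ _ 0 1); try ring. rewrite Rabs_R0; lra.
      * assert (C : c <> 0). { intro. subst. rewrite Rabs_R0 in E. pose proof (Rabs_pos (a-d)). lra. }
        subst. apply (mk_int _ _ _ _ _ ((a-d)/c) 1); try field; auto.
        unfold Rdiv. rewrite Rabs_mult, Rabs_inv.
        pose proof (Rabs_pos_lt c C).
        apply (Rmult_lt_reg_r (Rabs c)); auto.
        rewrite Rmult_assoc, Rinv_l; lra.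
  - intros l Hl. split.
    + intros H. destruct (int_char _ _ _ _ _ H) as [x1 [x2 [H1 [H2 H3]]]].
      pose proof (Rabs_pos x1).
      assert (P : a - l <> 0) by lra.
      split.
      * assert (((a-l)*(d-l) - b*c) * x2 = 0).
        { replace (((a-l)*(d-l) - b*c) * x2) with ((a-l)*(c*x1+(d-l)*x2) - c*((a-l)*x1+b*x2)) by ring.
          rewrite H1, H2; ring. }
        assert ((a-l)*(d-l) - b*c = 0) by nra. nra.
      * assert (Rabs b * x2 = Rabs (a-l) * Rabs x1).
        { rewrite <- (Rabs_pos_eq x2) by lra. rewrite <- !Rabs_mult. replace (b*x2) with (-((a-l)*x1)) by nra. apply Rabs_Ropp. }
        pose proof (Rabs_pos_lt _ P). pose proof (Rabs_pos b). nra.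
    + intros [Hc Hb].
      assert (P : a - l <> 0) by lra.
      apply (mk_int _ _ _ _ _ (-b/(a-l)) 1).
      * field; auto.
      * replace (c * (- b / (a - l)) + (d - l) * 1) with
          ((l * l - (a + d) * l + (a * d - b * c)) / (a-l)) by (field; auto).
        rewrite Hc. unfold Rdiv. ring.
      * unfold Rdiv. rewrite Rabs_mult, Rabs_inv, Rabs_Ropp.
        pose proof (Rabs_pos_lt _ P).
        apply (Rmult_lt_reg_r (Rabs (a-l))); auto.
        rewrite Rmult_assoc, Rinv_l; lra.
  - intros l. split.
    + intros [x1 [x2 [[Hnz [H1 [H2 H3]]] H4]]].
      unfold inK, inBdK in *.
      assert (x2 > 0).
      { destruct Hnz as [N|N]; absc; lra. }
      destruct (Rle_dec 0 x1) as [P|P].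
      * assert (x1 = x2) by (absc; lra). subst x1.
        assert (S : (a-l)+b+c+(d-l) = 0).
        { assert (x2*x2*((a-l)+b+c+(d-l)) = 0) by nra.
          assert (x2*x2 > 0) by nra. nra. }
        assert (x2 * ((a-l)+b) <= 0) by (absc; nra).
        assert ((a-l)+b <= 0) by nra.
        left. split; lra.
      * assert (x1 = -x2) by (absc; lra). subst x1.
        assert (S : (a-l)-b-c+(d-l) = 0).
        { assert (x2*x2*((a-l)-b-c+(d-l)) = 0) by nra.
          assert (x2*x2 > 0) by nra. nra. }
        assert (x2 * (b-(a-l)) >= 0) by (absc; nra).
        assert (b-(a-l) >= 0) by nra.
        right. split; lra.
    + intros [[E C]|[E C]].
      * exists 1, 1. unfold L_eigvec, inK, inBdK. rewrite Rabs_R1.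
        repeat split; try lra.
        absc; lra.
      * exists (-1), 1. unfold L_eigvec, inK, inBdK. 
        repeat split; try (left; lra); absc; lra.
Qed.
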